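(* Let $n\ge 2$ be an integer, let $a_1,\dots,a_n>0$ with $\sum_{k=1}^n a_k=1$, and let $c_k,d_k,\beta_k\in\mathbb{R}$ ($k=1,\dots,n$) with $\max_{1\le k\le n}|d_k|<1$. Put $\alpha_1=0$, $\alpha_k=\sum_{j=1}^{k-1}a_j$ for $k=2,\dots,n+1$, and $S_k(x)=a_kx+\alpha_k$. Let $f\in C[0;1]$ be a continuous function satisfying $f=G(f)$, where $$[G(f)](t)=\sum_{k=1}^n\bigl(d_k f(S_k^{-1}(t))+c_k t+\beta_k\bigr)\chi_{I_k}(t),\qquad I_1=[0;\alpha_2],\ I_k=(\alpha_k;\alpha_{k+1}]\ (k\ge2).$$ Suppose $|d_i|/a_i=1$ for all $i=1,\dots,n$. Then for every $\alpha\in(0;1)$ there is a constant $C\ge0$ such that $|f(x)-f(y)|\le C|x-y|^\alpha$ for all $x,y\in[0;1]$.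
   Context: Here $\chi_I$ is the indicator function of the interval $I$. A continuous function $f$ with $G(f)=f$ is called an (affine) self-similar function with self-similarity parameters $\{a_k\},\{c_k\},\{d_k\},\{\beta_k\}$. *)

(* Defs.v *)
(* concrete reals R. Indices k run over 1..n as in the paper. *)
From Stdlib Require Import Reals Lra ClassicalEpsilon.
Open Scope R_scope.

Fixpoint sumR (m : nat) (g : nat -> R) : R :=
  match m with
  | O => 0
  | S m' => sumR m' g + g (S m')
  end.

Definition alph (a : nat -> R) (k : nat) : R := sumR (Nat.pred k) a.

Definition Smap (a : nat -> R) (k : nat) (x : R) : R := a k * x + alph a k.
Definition Sinv (a : nat -> R) (k : nat) (t : R) : R := (t - alph a k) / a k.

Definition in_I (a : nat -> R) (k : nat) (t : R) : Prop :=
  if Nat.eqb k 1 then 0 <= t <= alph a 2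
  else alph a k < t <= alph a (S k).

Definition chiI (a : nat -> R) (k : nat) (t : R) : R :=
  if excluded_middle_informative (in_I a k t) then 1 else 0.

Definition Gop (n : nat) (a c d beta : nat -> R) (f : R -> R) (t : R) : R :=
  sumR n (fun k => (d k * f (Sinv a k t) + c k * t + beta k) * chiI a k t).

Definition cont01 (f : R -> R) : Prop :=
  forall x, 0 <= x <= 1 -> limit1_in f (fun y => 0 <= y <= 1) (f x) x.

(* Main.v *)
Require Import Defs.
From Stdlib Require Import Reals Lra Lia ClassicalEpsilon.
Open Scope R_scope.

Lemma sumR_mono (n : nat) (a : nat -> R) :
  (forall k, (1 <= k <= n)%nat -> 0 < a k) ->
  forall p q, (p <= q <= n)%nat -> sumR p a <= sumR q a.
Proof.
  intros Ha p q; induction q as [|q IH]; intros Hq.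
  - assert (p = 0%nat) by lia; subst; simpl; lra.
  - destruct (Nat.eq_dec p (S q)) as [->|Hne]; [lra|].
    simpl. assert (0 < a (S q)) by (apply Ha; lia).
    assert (sumR p a <= sumR q a) by (apply IH; lia). lra.
Qed.

Lemma sumR_zero (n : nat) (h : nat -> R) :
  (forall j, (1 <= j <= n)%nat -> h j = 0) -> sumR n h = 0.
Proof.
  induction n; intros H; simpl; [reflexivity|].
  rewrite IHn by (intros; apply H; lia). rewrite H by lia. lra.
Qed.

Lemma sumR_single (n : nat) (h : nat -> R) (k : nat) :
  (1 <= k <= n)%nat -> (forall j, (1 <= j <= n)%nat -> j <> k -> h j = 0) ->
  sumR n h = h k.
Proof.
  revert k; induction n; intros k Hk H; [lia|]. simpl.
  destruct (Nat.eq_dec k (S n)) as [->|Hne].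
  - rewrite sumR_zero; [lra|]. intros j Hj; apply H; lia.
  - rewrite (IHn k) by (try lia; intros; apply H; lia).
    rewrite (H (S n)) by lia. lra.
Qed.

Lemma alph_S (a : nat -> R) (k : nat) : (1 <= k)%nat -> alph a (S k) = alph a k + a k.
Proof. intros Hk. unfold alph. destruct k; [lia|]. simpl. reflexivity. Qed.

Lemma clamp_lip (y x : R) :
  Rabs (Rmax 0 (Rmin 1 y) - Rmax 0 (Rmin 1 x)) <= Rabs (y - x).
Proof.
  unfold Rmin.
  destruct (Rle_dec 1 y); destruct (Rle_dec 1 x);
  unfold Rmax;
  repeat match goal with |- context [Rle_dec ?u ?v] => destruct (Rle_dec u v) end;
  unfold Rabs; repeat match goal with |- context [Rcase_abs ?u] => destruct (Rcase_abs u) end;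
  repeat match goal with H: ~ _ <= _ |- _ => apply Rnot_le_lt in H end; lra.
Qed.

Lemma cont_eps (f : R -> R) : cont01 f -> forall x, 0 <= x <= 1 -> forall eps, 0 < eps ->
  exists del, 0 < del /\ forall y, 0 <= y <= 1 -> Rabs (y - x) < del -> Rabs (f y - f x) < eps.
Proof.
  intros Hc x Hx eps He. destruct (Hc x Hx eps He) as [del [Hd H]].
  exists del; split; [lra|]. intros y Hy Hyx. apply (H y). split; [exact Hy| exact Hyx].
Qed.

Lemma bounded01 (f : R -> R) : cont01 f -> exists M, 0 <= M /\ forall x, 0 <= x <= 1 -> Rabs (f x) <= M.
Proof.
  intros Hc.
  set (g := fun x => Rabs (f (Rmax 0 (Rmin 1 x)))).
  assert (Hcl : forall x, 0 <= Rmax 0 (Rmin 1 x) <= 1).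
  { intros x; unfold Rmax, Rmin; repeat destruct Rle_dec; repeat match goal with H: ~ _ <= _ |- _ => apply Rnot_le_lt in H end; lra. }
  assert (Hg : forall c, 0 <= c <= 1 -> continuity_pt g c).
  { intros c _. unfold continuity_pt, continue_in, limit1_in, limit_in. simpl.
    intros eps He. destruct (cont_eps f Hc _ (Hcl c) eps He) as [del [Hd H]].
    exists del; split; [lra|]. intros y [_ Hy]. unfold Rdist in *.
    unfold g. eapply Rle_lt_trans; [apply Rabs_triang_inv2|].
    apply H; [apply Hcl|]. eapply Rle_lt_trans; [apply clamp_lip| exact Hy]. }
  destruct (continuity_ab_maj g 0 1 ltac:(lra) Hg) as [Mx [HM HMx]].
  exists (g Mx); split; [unfold g; apply Rabs_pos|].
  intros x Hx. specialize (HM x Hx). unfold g in HM.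
  replace (Rmax 0 (Rmin 1 x)) with x in HM; [exact HM|].
  unfold Rmax, Rmin; repeat destruct Rle_dec; repeat match goal with H: ~ _ <= _ |- _ => apply Rnot_le_lt in H end; lra.
Qed.

Lemma div_le (a x y : R) : 0 < a -> x <= y -> x / a <= y / a.
Proof. intros Ha H. unfold Rdiv. apply Rmult_le_compat_r; [left; apply Rinv_0_lt_compat; lra| lra]. Qed.

Lemma le_div (a u h : R) : 0 < a -> u * a <= h -> u <= h / a.
Proof. intros Ha H. replace u with ((u * a) / a) by (field; lra). apply div_le; lra. Qed.

Lemma div_le1 (a h : R) : 0 < a -> h <= a -> h / a <= 1.
Proof. intros Ha H. replace 1 with (a / a) by (field; lra). apply div_le; lra. Qed.

Lemma ge_div (a h : R) : 0 < a <= 1 -> 0 <= h -> h <= h / a.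
Proof. intros Ha H. apply le_div; [lra|]. nra. Qed.

Lemma div_nonneg (a h : R) : 0 < a -> 0 <= h -> 0 <= h / a.
Proof. intros. replace 0 with (0 / a) by (field; lra). apply div_le; lra. Qed.

Lemma step_bound (d0 a0 c0 Cc K X s h : R) :
  Rabs d0 = a0 -> 0 < a0 -> Rabs c0 <= Cc -> Rabs X <= K * (h / a0) -> Rabs s <= h ->
  0 <= Cc ->
  Rabs (d0 * X + c0 * s) <= K * h + Cc * h.
Proof.
  intros Hd Ha Hc HX Hs HC.
  eapply Rle_trans; [apply Rabs_triang|]. rewrite !Rabs_mult, Hd.
  assert (E : a0 * (K * (h / a0)) = K * h) by (field; lra).
  assert (a0 * Rabs X <= a0 * (K * (h / a0))) by (apply Rmult_le_compat_l; lra).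
  assert (Rabs c0 * Rabs s <= Cc * h) by (apply Rmult_le_compat; try apply Rabs_pos; lra).
  lra.
Qed.

Lemma exists_min (a : nat -> R) (m : nat) :
  (forall k, (1 <= k <= m)%nat -> 0 < a k) -> exists mu, 0 < mu /\ forall k, (1 <= k <= m)%nat -> mu <= a k.
Proof.
  induction m; intros H.
  - exists 1; split; [lra| intros; lia].
  - destruct IHm as [mu [Hmu Hk]]; [intros; apply H; lia|].
    exists (Rmin mu (a (S m))); split.
    + apply Rmin_case; [lra| apply H; lia].
    + intros k Hk'. destruct (Nat.eq_dec k (S m)) as [->|Hne]; [apply Rmin_r|].
      eapply Rle_trans; [apply Rmin_l| apply Hk; lia].
Qed.

Lemma exists_max (g : nat -> R) (m : nat) :
  exists B, 0 <= B /\ forall k, (1 <= k <= m)%nat -> g k <= B.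
Proof.
  induction m.
  - exists 0; split; [lra| intros; lia].
  - destruct IHm as [B [HB Hk]].
    exists (Rmax B (g (S m))); split.
    + eapply Rle_trans; [exact HB| apply Rmax_l].
    + intros k Hk'. destruct (Nat.eq_dec k (S m)) as [->|Hne]; [apply Rmax_r|].
      eapply Rle_trans; [apply Hk; lia| apply Rmax_l].
Qed.

Lemma mq_bound (q : R) (m : nat) : 0 < q < 1 -> INR m * q ^ m <= 1 / (1 - q).
Proof.
  intros Hq.
  assert (H : (1 - q) * (INR m * q ^ m) <= 1 - q ^ m).
  { induction m.
    - simpl. lra.
    - rewrite S_INR. simpl.
      assert (0 <= q ^ m <= 1).
      { split; [apply pow_le; lra|]. rewrite <- (pow1 m). apply pow_incr; lra. }
      set (P := q ^ m) in *.
      assert (0 <= (1 - q) * (1 - q * P)) by (apply Rmult_le_pos; nra).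
      assert (q * ((1 - q) * (INR m * P)) <= q * (1 - P)) by (apply Rmult_le_compat_l; lra).
      nra. }
  assert (0 <= q ^ m) by (apply pow_le; lra).
  apply le_div; [lra|]. nra.
Qed.

Lemma choose_m (rho h : R) : 0 < rho < 1 -> 0 < h <= 1 ->
  exists m, rho ^ (S m) <= h <= rho ^ m.
Proof.
  intros Hr Hh.
  destruct (pow_lt_1_zero rho ltac:(rewrite Rabs_right; lra) h ltac:(lra)) as [N HN].
  specialize (HN N (le_n N)).
  assert (HN' : rho ^ N <= h) by (eapply Rle_trans; [apply RRle_abs| lra]).
  clear HN. induction N.
  - exists 0%nat. simpl in *. lra.
  - destruct (Rle_dec (rho ^ N) h) as [H|H]; [apply IHN; exact H|].
    exists N. lra.
Qed.

Theorem theorem4 (n : nat) (a c d beta : nat -> R) (f : R -> R) :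
  (2 <= n)%nat ->
  (forall k, (1 <= k <= n)%nat -> 0 < a k) ->
  sumR n a = 1 ->
  (forall k, (1 <= k <= n)%nat -> Rabs (d k) < 1) ->
  cont01 f ->
  (forall t, 0 <= t <= 1 -> f t = Gop n a c d beta f t) ->
  (forall i, (1 <= i <= n)%nat -> Rabs (d i) / a i = 1) ->
  forall al : R, 0 < al < 1 ->
  exists C : R, 0 <= C /\
    forall x y, 0 <= x <= 1 -> 0 <= y <= 1 ->
      Rabs (f x - f y) <= C * Rpower (Rabs (x - y)) al.
Proof.
  intros Hn Ha Hsum Hd Hc Hf Hda al Hal.
  assert (Hdabs : forall i, (1 <= i <= n)%nat -> Rabs (d i) = a i).
  { intros i Hi. specialize (Hda i Hi). specialize (Ha i Hi).
    apply (Rmult_eq_reg_r (/ a i)); [| apply Rinv_neq_0_compat; lra].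
    rewrite Rinv_r by lra. exact Hda. }
  assert (Hn1 : alph a (S n) = 1) by (unfold alph; simpl; exact Hsum).
  assert (H1 : alph a 1%nat = 0) by reflexivity.
  assert (Hmono : forall j k, (1 <= j <= k)%nat -> (k <= S n)%nat -> alph a j <= alph a k).
  { intros j k Hj Hk. unfold alph. apply (sumR_mono n); [exact Ha| lia]. }
  assert (HS : forall k, (1 <= k)%nat -> alph a (S k) = alph a k + a k) by (intros; apply alph_S; auto).
  assert (H01 : forall k, (1 <= k <= S n)%nat -> 0 <= alph a k <= 1).
  { intros k Hk. rewrite <- H1, <- Hn1. split; apply Hmono; lia. }
  assert (HG : forall k t, (1 <= k <= n)%nat -> 0 <= t <= 1 -> in_I a k t ->
     f t = d k * f (Sinv a k t) + c k * t + beta k).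
  { intros k t Hk Ht HI. rewrite (Hf t Ht). unfold Gop.
    rewrite (sumR_single n _ k Hk).
    - unfold chiI. destruct (excluded_middle_informative (in_I a k t)); [ring| contradiction].
    - intros j Hj Hjk. unfold chiI. destruct (excluded_middle_informative (in_I a j t)) as [HIj|]; [|ring].
      exfalso.
      assert (Hup : forall i, (1 <= i)%nat -> in_I a i t -> t <= alph a (S i)).
      { intros i Hi HIi. unfold in_I in HIi. destruct (Nat.eqb i 1) eqn:E.
        - apply Nat.eqb_eq in E; subst. simpl in *. lra.
        - lra. }
      assert (Hlo : forall i, (2 <= i)%nat -> in_I a i t -> alph a i < t).
      { intros i Hi HIi. unfold in_I in HIi. destruct (Nat.eqb i 1) eqn:E.
        - apply Nat.eqb_eq in E; lia.
        - lra. }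
      destruct (Nat.lt_ge_cases j k).
      + assert (alph a (S j) <= alph a k) by (apply Hmono; lia).
        specialize (Hup j ltac:(lia) HIj). specialize (Hlo k ltac:(lia) HI). lra.
      + assert (alph a (S k) <= alph a j) by (apply Hmono; lia).
        specialize (Hup k ltac:(lia) HI). specialize (Hlo j ltac:(lia) HIj). lra. }
  assert (Hend : forall k, (2 <= k <= n)%nat ->
     f (alph a k) = d k * f (Sinv a k (alph a k)) + c k * alph a k + beta k).
  { intros k Hk. set (p := alph a k).
    assert (Hs0 : Sinv a k p = 0) by (unfold Sinv, p; unfold Rdiv; ring).
    rewrite Hs0.
    assert (Hak : 0 < a k) by (apply Ha; lia).
    assert (Hp : 0 <= p <= 1) by (apply H01; lia).
    assert (HpS : alph a (S k) <= 1) by (apply H01; lia).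
    rewrite (HS k) in HpS by lia. fold p in HpS.
    destruct (Req_dec (f p) (d k * f 0 + c k * p + beta k)) as [E|E]; [exact E|].
    exfalso.
    set (eps := Rabs (f p - (d k * f 0 + c k * p + beta k)) / 3).
    assert (Heps : 0 < eps).
    { unfold eps. assert (0 < Rabs (f p - (d k * f 0 + c k * p + beta k))) by (apply Rabs_pos_lt; lra). lra. }
    destruct (cont_eps f Hc p Hp eps Heps) as [d1 [Hd1 C1]].
    destruct (cont_eps f Hc 0 ltac:(lra) eps Heps) as [d2 [Hd2 C2]].
    set (tau := Rmin (Rmin (d1 / 2) (d2 * a k / 2)) (Rmin (a k) (eps / (Rabs (c k) + 1)))).
    assert (Hc1 : 0 < Rabs (c k) + 1) by (pose proof (Rabs_pos (c k)); lra).
    assert (Ht1 : tau <= d1 / 2) by (unfold tau; eapply Rle_trans; [apply Rmin_l| apply Rmin_l]).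
    assert (Ht2 : tau <= d2 * a k / 2) by (unfold tau; eapply Rle_trans; [apply Rmin_l| apply Rmin_r]).
    assert (Ht3 : tau <= a k) by (unfold tau; eapply Rle_trans; [apply Rmin_r| apply Rmin_l]).
    assert (Ht4 : tau <= eps / (Rabs (c k) + 1)) by (unfold tau; eapply Rle_trans; [apply Rmin_r| apply Rmin_r]).
    assert (Ht0 : 0 < tau).
    { unfold tau. assert (0 < eps / (Rabs (c k) + 1)) by (apply Rdiv_lt_0_compat; lra).
      assert (0 < d2 * a k) by (apply Rmult_lt_0_compat; lra).
      repeat apply Rmin_case; lra. }
    assert (HI : in_I a k (p + tau)).
    { unfold in_I. destruct (Nat.eqb k 1) eqn:E1; [apply Nat.eqb_eq in E1; lia|].
      rewrite (HS k) by lia. fold p. lra. }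
    pose proof (HG k (p + tau) ltac:(lia) ltac:(lra) HI) as Ft.
    assert (Hsv : Sinv a k (p + tau) = tau / a k) by (unfold Sinv; fold p; field; lra).
    rewrite Hsv in Ft.
    assert (Hta : 0 <= tau / a k) by (apply div_nonneg; lra).
    assert (Hta2 : tau / a k < d2).
    { assert (tau / a k <= (d2 * a k / 2) / a k) by (apply div_le; lra).
      replace ((d2 * a k / 2) / a k) with (d2 / 2) in H by (field; lra). lra. }
    assert (Hta1 : tau / a k <= 1) by (apply div_le1; lra).
    specialize (C1 (p + tau) ltac:(lra) ltac:(rewrite Rabs_right; lra)).
    specialize (C2 (tau / a k) ltac:(lra) ltac:(rewrite Rabs_right; lra)).
    assert (Hdk : Rabs (d k) < 1) by (apply Hd; lia).
    assert (B2 : Rabs (d k * (f (tau / a k) - f 0)) <= eps).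
    { rewrite Rabs_mult.
      assert (Rabs (d k) * Rabs (f (tau / a k) - f 0) <= 1 * eps).
      { apply Rmult_le_compat; try apply Rabs_pos; lra. }
      lra. }
    assert (B3 : Rabs (c k * tau) < eps).
    { rewrite Rabs_mult, (Rabs_right tau) by lra.
      assert ((Rabs (c k) + 1) * tau <= (Rabs (c k) + 1) * (eps / (Rabs (c k) + 1))) by (apply Rmult_le_compat_l; lra).
      replace ((Rabs (c k) + 1) * (eps / (Rabs (c k) + 1))) with eps in H by (field; lra).
      lra. }
    assert (EE : f p - (d k * f 0 + c k * p + beta k) =
      - (f (p + tau) - f p) + d k * (f (tau / a k) - f 0) + c k * tau) by (rewrite Ft; ring).
    assert (Rabs (f p - (d k * f 0 + c k * p + beta k)) < 3 * eps).
    { rewrite EE. eapply Rle_lt_trans; [apply Rabs_triang|].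
      eapply Rle_lt_trans; [apply Rplus_le_compat_r; apply Rabs_triang|].
      rewrite Rabs_Ropp. lra. }
    unfold eps in H. lra. }
  assert (HF : forall k t, (1 <= k <= n)%nat -> alph a k <= t <= alph a (S k) ->
     f t = d k * f (Sinv a k t) + c k * t + beta k).
  { intros k t Hk Ht.
    assert (0 <= alph a k) by (apply H01; lia).
    assert (alph a (S k) <= 1) by (apply H01; lia).
    destruct (Nat.eq_dec k 1) as [->|Hk1].
    - apply HG; [lia| lra|]. unfold in_I. simpl Nat.eqb. cbv iota. rewrite H1 in Ht. lra.
    - destruct (Req_dec t (alph a k)) as [->|Hne]; [apply Hend; lia|].
      apply HG; [lia| lra|]. unfold in_I. destruct (Nat.eqb k 1) eqn:E1; [apply Nat.eqb_eq in E1; lia|]. lra. }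
  destruct (exists_min a n Ha) as [mu [Hmu Hmua]].
  assert (Hpair : forall i j, (1 <= i < j)%nat -> (j <= n)%nat -> a i + a j <= 1).
  { intros i j Hij Hj.
    assert (alph a (S j) <= 1) by (rewrite <- Hn1; apply Hmono; lia).
    assert (alph a (S i) <= alph a j) by (apply Hmono; lia).
    assert (0 <= alph a i) by (apply H01; lia).
    rewrite HS in * by lia. lra. }
  set (rho := 1 - mu).
  assert (Hrho : forall k, (1 <= k <= n)%nat -> a k <= rho).
  { intros k Hk. unfold rho. destruct (Nat.eq_dec k 1) as [->|Hk1].
    - pose proof (Hpair 1%nat 2%nat ltac:(lia) ltac:(lia)). pose proof (Hmua 2%nat ltac:(lia)). lra.
    - pose proof (Hpair 1%nat k ltac:(lia) ltac:(lia)). pose proof (Hmua 1%nat ltac:(lia)). lra. }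
  assert (Hrho01 : 0 < rho < 1).
  { pose proof (Hrho 1%nat ltac:(lia)). pose proof (Ha 1%nat ltac:(lia)). unfold rho in *. lra. }
  assert (Hmu1 : mu < 1) by (pose proof (Hmua 1%nat ltac:(lia)); pose proof (Hrho 1%nat ltac:(lia)); lra).
  destruct (bounded01 f Hc) as [M [HM0 HM]].
  destruct (exists_max (fun k => Rabs (c k)) n) as [Cc [HCc HCck]].
  simpl in HCck.
  set (A := 2 * M / mu).
  assert (HA : 0 <= A) by (unfold A; apply div_nonneg; lra).
  assert (crude : forall u v h K, 0 <= u <= 1 -> 0 <= v <= 1 -> mu <= h -> A <= K ->
            Rabs (f u - f v) <= K * h).
  { intros u v h K Hu Hv Hh HK.
    assert (Rabs (f u - f v) <= 2 * M).
    { unfold Rminus. eapply Rle_trans; [apply Rabs_triang|]. rewrite Rabs_Ropp.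
      pose proof (HM u Hu); pose proof (HM v Hv). lra. }
    assert (A * mu = 2 * M) by (unfold A; field; lra).
    assert (A * mu <= A * h) by (apply Rmult_le_compat_l; lra).
    assert (A * h <= K * h) by (apply Rmult_le_compat_r; lra).
    lra. }
  assert (HK : forall m, A <= A + Cc * INR m).
  { intros m. pose proof (pos_INR m). assert (0 <= Cc * INR m) by (apply Rmult_le_pos; lra). lra. }
  assert (Hpow : forall m h k, (1 <= k <= n)%nat -> rho ^ (S m) <= h -> rho ^ m <= h / a k).
  { intros m h k Hk Hr. apply le_div; [apply Ha; lia|]. simpl in Hr.
    assert (0 <= rho ^ m) by (apply pow_le; lra).
    assert (rho ^ m * a k <= rho ^ m * rho) by (apply Rmult_le_compat_l; [lra| apply Hrho; lia]).
    lra. }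
  assert (Left : forall m s h, 0 <= s <= h -> h <= 1 -> rho ^ m <= h ->
            Rabs (f s - f 0) <= (A + Cc * INR m) * h).
  { induction m as [|m IH]; intros s h Hs Hh Hr.
    - apply crude; [lra|lra| simpl in Hr; lra| apply HK].
    - assert (Ha1 : 0 < a 1%nat) by (apply Ha; lia).
      destruct (Rle_lt_dec h (a 1%nat)) as [Hh1|Hh1].
      + assert (HS2 : alph a 2 = a 1%nat) by (rewrite (HS 1%nat) by lia; rewrite H1; ring).
        pose proof (HF 1%nat s ltac:(lia) ltac:(rewrite H1, HS2; lra)) as Fs.
        pose proof (HF 1%nat 0 ltac:(lia) ltac:(rewrite H1, HS2; lra)) as F0.
        assert (E1 : Sinv a 1%nat s = s / a 1%nat) by (unfold Sinv; rewrite H1; f_equal; ring).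
        assert (E0 : Sinv a 1%nat 0 = 0) by (unfold Sinv; rewrite H1; unfold Rdiv; ring).
        rewrite E1 in Fs. rewrite E0 in F0.
        assert (E : f s - f 0 = d 1%nat * (f (s / a 1%nat) - f 0) + c 1%nat * s) by lra.
        rewrite E. eapply Rle_trans.
        * apply (step_bound _ (a 1%nat) _ Cc (A + Cc * INR m) _ _ h).
          -- apply Hdabs; lia.
          -- exact Ha1.
          -- apply HCck; lia.
          -- apply IH.
             ++ split; [apply div_nonneg; lra| apply div_le; lra].
             ++ apply div_le1; lra.
             ++ apply (Hpow m h 1%nat); [lia| exact Hr].
          -- rewrite Rabs_right; lra.
          -- exact HCc.
        * rewrite S_INR. right; ring.
      + apply crude; [lra|lra| pose proof (Hmua 1%nat ltac:(lia)); lra| apply HK]. }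
  assert (Hann : 0 < a n) by (apply Ha; lia).
  assert (Halpn : alph a n = 1 - a n) by (rewrite (HS n) in Hn1 by lia; lra).
  assert (Right : forall m s h, 0 <= s <= 1 -> 1 - s <= h -> h <= 1 -> rho ^ m <= h ->
            Rabs (f s - f 1) <= (A + Cc * INR m) * h).
  { induction m as [|m IH]; intros s h Hs Hsh Hh Hr.
    - apply crude; [lra|lra| simpl in Hr; lra| apply HK].
    - destruct (Rle_lt_dec h (a n)) as [Hh1|Hh1].
      + pose proof (HF n s ltac:(lia) ltac:(rewrite Hn1, Halpn; lra)) as Fs.
        pose proof (HF n 1 ltac:(lia) ltac:(rewrite Hn1, Halpn; lra)) as F1.
        assert (E1 : Sinv a n 1 = 1) by (unfold Sinv; rewrite Halpn; field; lra).
        rewrite E1 in F1.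
        set (s' := Sinv a n s) in *.
        assert (Es : 1 - s' = (1 - s) / a n) by (unfold s', Sinv; rewrite Halpn; field; lra).
        assert (E : f s - f 1 = d n * (f s' - f 1) + c n * (s - 1)) by lra.
        rewrite E. eapply Rle_trans.
        * apply (step_bound _ (a n) _ Cc (A + Cc * INR m) _ _ h).
          -- apply Hdabs; lia.
          -- exact Hann.
          -- apply HCck; lia.
          -- apply IH.
             ++ assert (0 <= (1 - s) / a n) by (apply div_nonneg; lra).
                assert ((1 - s) / a n <= 1) by (apply div_le1; lra). lra.
             ++ rewrite Es; apply div_le; lra.
             ++ apply div_le1; lra.
             ++ apply (Hpow m h n); [lia| exact Hr].
          -- rewrite Rabs_left1; lra.
          -- exact HCc.
        * rewrite S_INR. right; ring.
      + apply crude; [lra|lra| pose proof (Hmua n ltac:(lia)); lra| apply HK]. }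
  assert (Hidx : forall x, 0 <= x <= 1 -> exists k, (1 <= k <= n)%nat /\ alph a k <= x <= alph a (S k)).
  { intros x Hx.
    assert (G : forall m, (1 <= m <= n)%nat -> x <= alph a (S m) ->
              exists k, (1 <= k <= m)%nat /\ alph a k <= x <= alph a (S k)).
    { induction m as [|m IH]; intros Hm Hxm; [lia|].
      destruct (Nat.eq_dec m 0) as [->|Hm0].
      - exists 1%nat. split; [lia|]. rewrite H1. lra.
      - destruct (Rle_dec x (alph a (S m))) as [Hle|Hle].
        + destruct (IH ltac:(lia) Hle) as [k [Hk Hk2]]. exists k; split; [lia| exact Hk2].
        + exists (S m). split; [lia| lra]. }
    destruct (G n ltac:(lia) ltac:(lra)) as [k [Hk Hk2]]. exists k; split; [lia| exact Hk2]. }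
  assert (HK2 : forall m, A <= 2 * A + 2 * Cc + 2 * Cc * INR m).
  { intros m. pose proof (pos_INR m). assert (0 <= Cc * INR m) by (apply Rmult_le_pos; lra). lra. }
  assert (Main : forall m x y h, 0 <= x -> x <= y -> y <= 1 -> y - x <= h -> h <= 1 -> rho ^ m <= h ->
            Rabs (f y - f x) <= (2 * A + 2 * Cc + 2 * Cc * INR m) * h).
  { induction m as [|m IH]; intros x y h Hx Hxy Hy1 Hyx Hh Hr.
    - apply crude; [lra|lra| simpl in Hr; lra| apply HK2].
    - destruct (Hidx x ltac:(lra)) as [k [Hk [Hxk1 Hxk2]]].
      assert (Hak : 0 < a k) by (apply Ha; lia).
      assert (Hak1 : a k < 1) by (pose proof (Hrho k Hk); lra).
      assert (HSk := HS k ltac:(lia)).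
      assert (HCh : 0 <= Cc * h) by (apply Rmult_le_pos; lra).
      destruct (Rle_dec y (alph a (S k))) as [Hy|Hy].
      + destruct (Rle_lt_dec h (a k)) as [Hhk|Hhk].
        * pose proof (HF k x Hk ltac:(lra)) as Fx.
          pose proof (HF k y Hk ltac:(lra)) as Fy.
          set (x' := Sinv a k x) in *. set (y' := Sinv a k y) in *.
          assert (Ey : y' - x' = (y - x) / a k) by (unfold x', y', Sinv; field; lra).
          assert (Hx' : 0 <= x') by (unfold x', Sinv; apply div_nonneg; lra).
          assert (Hy' : y' <= 1) by (unfold y', Sinv; apply div_le1; lra).
          assert (Hxy' : 0 <= y' - x') by (rewrite Ey; apply div_nonneg; lra).
          assert (E : f y - f x = d k * (f y' - f x') + c k * (y - x)) by lra.
          rewrite E. eapply Rle_trans.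
          -- apply (step_bound _ (a k) _ Cc (2 * A + 2 * Cc + 2 * Cc * INR m) _ _ h).
             ++ apply Hdabs; lia.
             ++ exact Hak.
             ++ apply HCck; lia.
             ++ apply IH; try lra.
                ** rewrite Ey; apply div_le; lra.
                ** apply div_le1; lra.
                ** apply (Hpow m h k); [lia| exact Hr].
             ++ rewrite Rabs_right; lra.
             ++ exact HCc.
          -- rewrite S_INR. lra.
        * apply crude; [lra|lra| pose proof (Hmua k Hk); lra| apply HK2].
      + apply Rnot_le_lt in Hy.
        set (p := alph a (S k)) in *.
        assert (HkS : (S k <= n)%nat).
        { destruct (Nat.eq_dec k n) as [->|]; [|lia]. unfold p in Hy. lra. }
        assert (Hak2 : 0 < a (S k)) by (apply Ha; lia).
        assert (Hak21 : a (S k) < 1) by (pose proof (Hrho (S k) ltac:(lia)); lra).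
        assert (Hp1 : p <= 1) by lra.
        assert (Hrh : rho ^ S m <= h) by exact Hr.
        assert (P1 : Rabs (f x - f p) <= (A + Cc * INR (S m)) * h + Cc * h).
        { destruct (Rle_lt_dec h (a k)) as [Hhk|Hhk].
          - pose proof (HF k x Hk ltac:(unfold p in *; lra)) as Fx.
            pose proof (HF k p Hk ltac:(unfold p in *; lra)) as Fp.
            assert (Ep : Sinv a k p = 1) by (unfold Sinv; rewrite HSk; field; lra).
            rewrite Ep in Fp.
            set (x' := Sinv a k x) in *.
            assert (Ex : 1 - x' = (p - x) / a k) by (unfold x', Sinv; rewrite HSk; field; lra).
            assert (E : f x - f p = d k * (f x' - f 1) + c k * (x - p)) by lra.
            rewrite E. apply (step_bound _ (a k) _ Cc (A + Cc * INR (S m)) _ _ h).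
            + apply Hdabs; lia.
            + exact Hak.
            + apply HCck; lia.
            + apply Right.
              * assert (0 <= (p - x) / a k) by (apply div_nonneg; lra).
                assert ((p - x) / a k <= 1) by (apply div_le1; lra). lra.
              * rewrite Ex; apply div_le; lra.
              * apply div_le1; lra.
              * eapply Rle_trans; [exact Hrh| apply ge_div; lra].
            + rewrite Rabs_left1; lra.
            + exact HCc.
          - eapply Rle_trans.
            + apply (crude x p h (A + Cc * INR (S m) + Cc)); [lra|lra| pose proof (Hmua k Hk); lra|].
              pose proof (HK (S m)); lra.
            + lra. }
        assert (P2 : Rabs (f y - f p) <= (A + Cc * INR (S m)) * h + Cc * h).
        { assert (HSSk := HS (S k) ltac:(lia)). fold p in HSSk.
          destruct (Rle_lt_dec h (a (S k))) as [Hhk|Hhk].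
          - pose proof (HF (S k) y ltac:(lia) ltac:(unfold p in *; lra)) as Fy.
            pose proof (HF (S k) p ltac:(lia) ltac:(unfold p in *; lra)) as Fp.
            assert (Ep : Sinv a (S k) p = 0) by (unfold Sinv, p; unfold Rdiv; ring).
            rewrite Ep in Fp.
            set (y' := Sinv a (S k) y) in *.
            assert (Ey : y' = (y - p) / a (S k)) by (unfold y', Sinv, p; reflexivity).
            assert (E : f y - f p = d (S k) * (f y' - f 0) + c (S k) * (y - p)) by lra.
            rewrite E. apply (step_bound _ (a (S k)) _ Cc (A + Cc * INR (S m)) _ _ h).
            + apply Hdabs; lia.
            + exact Hak2.
            + apply HCck; lia.
            + apply Left.
              * rewrite Ey; split; [apply div_nonneg; lra| apply div_le; lra].
              * apply div_le1; lra.
              * eapply Rle_trans; [exact Hrh| apply ge_div; lra].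
            + rewrite Rabs_right; lra.
            + exact HCc.
          - eapply Rle_trans.
            + apply (crude y p h (A + Cc * INR (S m) + Cc)); [lra|lra| pose proof (Hmua (S k) ltac:(lia)); lra|].
              pose proof (HK (S m)); lra.
            + lra. }
        replace (f y - f x) with ((f y - f p) + - (f x - f p)) by ring.
        eapply Rle_trans; [apply Rabs_triang|]. rewrite Rabs_Ropp.
        rewrite !S_INR in *. lra. }
  set (q := Rpower rho (1 - al)).
  assert (Hq : 0 < q < 1).
  { unfold q, Rpower. split; [apply exp_pos|].
    assert (ln rho < 0) by (rewrite <- ln_1; apply ln_increasing; lra).
    apply Rlt_le_trans with (exp 0); [apply exp_increasing; nra| rewrite exp_0; lra]. }
  set (K0 := 2 * A + 2 * Cc).
  set (C := K0 + 2 * Cc * (1 / (1 - q)) + 2 * Cc).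
  assert (Hiq : 0 < 1 / (1 - q)) by (apply Rdiv_lt_0_compat; lra).
  assert (HC : 0 <= C).
  { unfold C, K0. assert (0 <= Cc * (1 / (1 - q))) by (apply Rmult_le_pos; lra). lra. }
  assert (Key : forall x y, 0 <= x -> x <= y -> y <= 1 -> Rabs (f y - f x) <= C * Rpower (y - x) al).
  { intros x y Hx Hxy Hy.
    assert (HP : 0 < Rpower (y - x) al) by (unfold Rpower; apply exp_pos).
    destruct (Req_dec x y) as [<-|Hne].
    - replace (f x - f x) with 0 by ring. rewrite Rabs_R0. apply Rmult_le_pos; lra.
    - set (h := y - x).
      destruct (choose_m rho h Hrho01 ltac:(unfold h; lra)) as [m [Hm1 Hm2]].
      pose proof (Main (S m) x y h Hx Hxy Hy ltac:(unfold h; lra) ltac:(unfold h; lra) Hm1) as HB.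
      fold K0 in HB. set (Kt := K0 + 2 * Cc * INR (S m)) in HB.
      assert (Hh : h = Rpower h al * Rpower h (1 - al)).
      { rewrite <- Rpower_plus. replace (al + (1 - al)) with 1 by ring. rewrite Rpower_1; [reflexivity|unfold h; lra]. }
      assert (HQ : Rpower h (1 - al) <= q ^ m).
      { eapply Rle_trans; [apply Rle_Rpower_l; [lra| split; [unfold h; lra| exact Hm2]]|].
        rewrite <- (Rpower_pow m rho) by lra. rewrite <- (Rpower_pow m q) by lra.
        unfold q. rewrite !Rpower_mult. rewrite Rmult_comm. lra. }
      assert (HKt : 0 <= Kt).
      { unfold Kt, K0. pose proof (pos_INR (S m)). assert (0 <= Cc * INR (S m)) by (apply Rmult_le_pos; lra). lra. }
      assert (HqC : Kt * q ^ m <= C).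
      { unfold Kt, C. rewrite S_INR.
        assert (0 <= q ^ m) by (apply pow_le; lra).
        assert (q ^ m <= 1) by (rewrite <- (pow1 m); apply pow_incr; lra).
        pose proof (mq_bound q m Hq).
        assert (K0 * q ^ m <= K0 * 1) by (apply Rmult_le_compat_l; [unfold K0; lra| lra]).
        assert (Cc * (INR m * q ^ m) <= Cc * (1 / (1 - q))) by (apply Rmult_le_compat_l; lra).
        assert (Cc * q ^ m <= Cc * 1) by (apply Rmult_le_compat_l; lra).
        nra. }
      assert (HP' : 0 < Rpower h al) by (unfold Rpower; apply exp_pos).
      eapply Rle_trans; [exact HB|]. rewrite Hh at 1.
      assert (Kt * (Rpower h al * Rpower h (1 - al)) <= Kt * (Rpower h al * q ^ m)).
      { apply Rmult_le_compat_l; [lra|]. apply Rmult_le_compat_l; lra. }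
      assert ((Kt * q ^ m) * Rpower h al <= C * Rpower h al) by (apply Rmult_le_compat_r; lra).
      nra. }
  exists C; split; [exact HC|].
  intros x y Hx Hy.
  destruct (Rle_dec x y) as [Hxy|Hxy].
  - rewrite (Rabs_minus_sym (f x)). rewrite (Rabs_minus_sym x y). rewrite (Rabs_right (y - x)) by lra.
    apply Key; lra.
  - apply Rnot_le_lt in Hxy. rewrite (Rabs_right (x - y)) by lra. apply Key; lra.
Qed.
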